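(* Let $G$ be a connected cubic graph on $n$ vertices. Then $M(G)\leq Z(G)\leq n/2+1$.
   Context: A cubic graph is a $3$-regular simple graph. For a graph $G$ on vertices $w_1,\dots,w_n$, $S(G)$ is the set of real symmetric $n\times n$ matrices $A$ such that for $s\neq t$, $a_{st}\neq 0$ if and only if $w_s$ and $w_t$ are adjacent (diagonal entries arbitrary); the maximum nullity $M(G)$ is the maximum nullity of a matrix in $S(G)$. Zero forcing: color each vertex black or white; if a black vertex has exactly one white neighbor, that neighbor is recolored black. A set $Z$ is a zero forcing set if starting with exactly $Z$ black and applying this rule repeatedly makes all vertices black; $Z(G)$ is the minimum size of a zero forcing set. *)

(* Defs.v *)
From HB Require Import structures.
From mathcomp Require Import all_boot all_order all_algebra.
From mathcomp Require Import boolp reals.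
Set Implicit Arguments. Unset Strict Implicit. Unset Printing Implicit Defensive.
Import Order.TTheory GRing.Theory Num.Theory.

Definition simple_graph (n : nat) (e : rel 'I_n) : Prop :=
  symmetric e /\ irreflexive e.

Definition cubic (n : nat) (e : rel 'I_n) : Prop :=
  forall v : 'I_n, #|[set w | e v w]| = 3.

Definition connected_graph (n : nat) (e : rel 'I_n) : Prop :=
  forall u v : 'I_n, connect e u v.

Definition in_SG (R : realType) (n : nat) (e : rel 'I_n) (A : 'M[R]_n) : Prop :=
  (A^T = A)%R /\ (forall s t : 'I_n, s != t -> (A s t != 0)%R = e s t).

Definition nullity (R : realType) (n : nat) (A : 'M[R]_n) : nat := n - \rank A.

(* M(G): maximum nullity of a matrix in S(G) (nullities lie in [0, n]) *)
Definition max_nullity (R : realType) (n : nat) (e : rel 'I_n) : nat :=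
  \max_(k < n.+1 | `[< exists A : 'M[R]_n, in_SG e A /\ nullity A = k >]) (k : nat).

Definition force_step (n : nat) (e : rel 'I_n) (B : {set 'I_n}) : {set 'I_n} :=
  B :|: [set w | (w \notin B) && [exists v in B, e v w &&
          [forall u, (e v u && (u \notin B)) ==> (u == w)]]].

(* the final colouring after repeatedly applying the rule (it stabilises
   after at most n rounds) *)
Definition zf_closure (n : nat) (e : rel 'I_n) (Z : {set 'I_n}) : {set 'I_n} :=
  iter n (force_step e) Z.

Definition zero_forcing_set (n : nat) (e : rel 'I_n) (Z : {set 'I_n}) : bool :=
  zf_closure e Z == [set: 'I_n].

(* Z(G): minimum size of a zero forcing set (setT is one, so bound n) *)
Definition zero_forcing_number (n : nat) (e : rel 'I_n) : nat :=
  \big[minn/n]_(Z : {set 'I_n} | zero_forcing_set e Z) #|Z|.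

(* Main.v *)
Require Import Defs.
From HB Require Import structures.
From mathcomp Require Import all_boot all_order all_algebra.
From mathcomp Require Import boolp reals.
From mathcomp Require Import zify.
Set Implicit Arguments. Unset Strict Implicit. Unset Printing Implicit Defensive.
Import Order.TTheory GRing.Theory Num.Theory.

Section ZF.
Variables (n : nat) (e : rel 'I_n).
Local Notation fs := (force_step e).
Local Notation cl := (zf_closure e).

Lemma fs_ext (B : {set 'I_n}) : B \subset fs B.
Proof. exact: subsetUl. Qed.

Lemma fs_mono : {homo fs : X Y / X \subset Y}.
Proof.
move=> X Y XY; apply/subsetP => w; rewrite !inE.
case/orP=> [wX | /andP[wnX /existsP[v /andP[vX /andP[evw /forallP H]]]]].
  by rewrite (subsetP XY w wX).
case wY: (w \in Y) => //=; apply/existsP; exists v.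
rewrite (subsetP XY v vX) evw /=; apply/forallP => x; apply/implyP => /andP[evx xY].
have := H x; rewrite evx /= => /implyP; apply; apply: contra xY; exact: (subsetP XY).
Qed.

Lemma iter_ext k (Z : {set 'I_n}) : Z \subset iter k fs Z.
Proof. elim: k => //= k IH; exact: subset_trans IH (fs_ext _). Qed.

Lemma cl_ext (Z : {set 'I_n}) : Z \subset cl Z.
Proof. exact: iter_ext. Qed.

Lemma cl_least (Z X : {set 'I_n}) : Z \subset X -> fs X \subset X -> cl Z \subset X.
Proof.
move=> ZX fX; rewrite /zf_closure.
suff: forall k, iter k fs Z \subset X by [].
elim=> //= k IH; exact: subset_trans (fs_mono IH) fX.
Qed.

Lemma cl_fix (Z : {set 'I_n}) : fs (cl Z) = cl Z.
Proof.
rewrite /zf_closure.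
have Fm : {homo (fun X => fs (Z :|: X)) : X Y / X \subset Y}.
  by move=> X Y XY; apply: fs_mono; rewrite setUS.
have E : forall k, iter k.+1 (fun X => fs (Z :|: X)) set0 = iter k.+1 fs Z.
  elim=> [|k IH]; first by rewrite /= setU0.
  by rewrite iterS IH (setUidPr (iter_ext _ _)) [in RHS]iterS.
have := fixsetK Fm; rewrite /fixset card_ord.
have [n0|npos] := posnP n.
  by move=> _; apply/setP => x; have := ltn_ord x; lia.
have E' : forall k, 0 < k -> iter k (fun X => fs (Z :|: X)) set0 = iter k fs Z.
  by case=> // k _; exact: E.
by rewrite (E' n npos) (setUidPr (iter_ext _ _)).
Qed.

Hypothesis sym_e : symmetric e.
Hypothesis irr_e : irreflexive e.
Hypothesis cub : cubic e.
Hypothesis con : connected_graph e.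

Lemma nbr_cl (Z : {set 'I_n}) : (forall z, z \in Z -> exists2 y, y \in cl Z & e z y) ->
  forall x, x \in cl Z -> exists2 y, y \in cl Z & e x y.
Proof.
move=> H.
pose Y := [set x in cl Z | [exists y in cl Z, e x y]].
have YC : Y \subset cl Z by apply/subsetP => x; rewrite inE => /andP[].
have : cl Z \subset Y.
  apply: cl_least.
    apply/subsetP => z zZ; rewrite inE (subsetP (cl_ext Z) z zZ) /=.
    by case: (H z zZ) => y yC ezy; apply/existsP; exists y; rewrite yC.
  apply/subsetP => w wf.
  have wC : w \in cl Z by rewrite -cl_fix; exact: (subsetP (fs_mono YC)).
  move: wf; rewrite !inE => /orP[//|/andP[_ /existsP[v /andP[vY /andP[evw _]]]]].
  rewrite wC /=; apply/existsP; exists v; rewrite (subsetP YC v vY) /=.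
  by rewrite sym_e.
move=> /subsetP CY x /CY; rewrite inE => /andP[_ /existsP[y /andP[yC exy]]].
by exists y.
Qed.

Definition inv (Z : {set 'I_n}) := forall z, z \in Z -> exists2 y, y \in cl Z & e z y.

Lemma step (Z : {set 'I_n}) x0 : x0 \in Z -> inv Z -> cl Z != setT ->
  exists w, inv (w |: Z) /\ #|cl Z| + 2 <= #|cl (w |: Z)|.
Proof.
move=> x0Z HZ CnT.
set C := cl Z.
have [u [w [uC [wC euw]]]] : exists u w, u \in C /\ w \notin C /\ e u w.
  case: (pselect (exists u w, u \in C /\ w \notin C /\ e u w)) => // Hn.
  exfalso; move/eqP: CnT; apply; apply/setP => y; rewrite inE.
  have cl_a : closed e (mem C).
    move=> a b eab; apply/idP/idP => [aC|bC].
      by apply: contra_notT Hn => bC; exists a, b.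
    by apply: contra_notT Hn => aC; exists b, a; rewrite sym_e.
  rewrite -(closed_connect cl_a (con x0 y)).
  exact: (subsetP (cl_ext Z) x0 x0Z).
have [b bC eub] := nbr_cl HZ uC.
have [w2 [euw2 [w2C w2w]]] : exists w2, e u w2 /\ w2 \notin C /\ w2 != w.
  have wfs : w \notin fs C by rewrite /C cl_fix.
  move: wfs; rewrite !inE negb_or => /andP[_].
  rewrite wC /= => /negP Hn.
  have : ~~ [forall x, (e u x && (x \notin C)) ==> (x == w)].
    by apply/negP => Hf; apply: Hn; apply/existsP; exists u; rewrite uC euw Hf.
  move=> /forallPn [x]; rewrite negb_imply => /andP[/andP[eux xC] xw].
  by exists x.
set Z' := w |: Z; set C' := cl Z'.
have CC' : C \subset C'.
  apply: cl_least; last by rewrite cl_fix.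
  exact: subset_trans (subsetUr _ _) (cl_ext Z').
have wC' : w \in C' by apply: (subsetP (cl_ext Z')); rewrite setU11.
have w2C' : w2 \in C'.
  apply: contraT => w2n.
  suff: w2 \in fs C' by rewrite /C' cl_fix -/C' (negbTE w2n).
  rewrite inE; apply/orP; right; rewrite inE w2n /=; apply/existsP; exists u; rewrite (subsetP CC' u uC) euw2 /=.
  apply/forallP => x; apply/implyP => /andP[eux xn]; apply: contraT => xw2.
  have xb : x != b by apply: contraNneq xn => ->; exact: (subsetP CC').
  have xw : x != w by apply: contraNneq xn => ->.
  have bw : b != w by apply: contraNneq wC => <-.
  have bw2 : b != w2 by apply: contraNneq w2C => <-.
  have : #|b |: (w |: (w2 |: [set x]))| <= #|[set y | e u y]|.
    apply: subset_leq_card; apply/subsetP => y; rewrite !inE.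
    by case/or4P => /eqP ->.
  rewrite cub !cardsU1 cards1 !inE.
  by rewrite (negbTE bw) (negbTE bw2) (eq_sym b x) (negbTE xb) (eq_sym w w2)
    (negbTE w2w) (eq_sym w x) (negbTE xw) (eq_sym w2 x) (negbTE xw2).
exists w; split.
  move=> z; rewrite !inE => /orP[/eqP ->|zZ].
    by exists u; rewrite ?(subsetP CC') // sym_e.
  by case: (HZ z zZ) => y yC ezy; exists y; rewrite ?(subsetP CC').
have : w |: (w2 |: C) \subset C'.
  by apply/subsetP => y; rewrite !inE => /orP[/eqP->|/orP[/eqP->|/(subsetP CC')]].
move=> /subset_leq_card; rewrite !cardsU1 !inE negb_or (eq_sym w w2) w2w.
by rewrite (negbTE wC) w2C /= -/Z' -/C'; lia.
Qed.

Lemma grow k (Z : {set 'I_n}) x0 : x0 \in Z -> n - #|cl Z| <= k -> inv Z ->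
  2 * #|Z| <= #|cl Z| + 2 ->
  exists Z', zero_forcing_set e Z' /\ 2 * #|Z'| <= n + 2.
Proof.
elim: k Z => [|k IH] Z x0Z Hk HZ Hc;
  (have [CT|CnT] := eqVneq (cl Z) setT;
   [exists Z; split; [by apply/eqP| by move: Hc; rewrite CT cardsT card_ord]|]).
  move: CnT; rewrite eqEcard subsetT cardsT card_ord /= -ltnNge => h; exfalso.
  by move: Hk; rewrite leqn0 subn_eq0 leqNgt h.
have [w [Hw Hcard]] := step x0Z HZ CnT.
apply: (IH (w |: Z)); first by rewrite setU1r.
- lia.
- exact: Hw.
- move: (cardsU1 w Z) => E; have : (w \notin Z) <= 1 by case: (w \notin Z).
  lia.
Qed.

End ZF.

Lemma bigmin_leq (I : eqType) (r : seq I) (P : pred I) (F : I -> nat) m i :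
  i \in r -> P i -> \big[minn/m]_(j <- r | P j) F j <= F i.
Proof.
elim: r => // a r IH; rewrite inE big_cons => /orP[/eqP<- Pi|ir Pi].
  by rewrite Pi geq_minl.
case: (P a); last exact: IH.
by rewrite geq_min IH // orbT.
Qed.

Lemma upper n (e : rel 'I_n) : simple_graph e -> cubic e -> connected_graph e ->
  2 * zero_forcing_number e <= n + 2.
Proof.
move=> [sym_e irr_e] cub con.
have zmin : forall Z, zero_forcing_set e Z -> zero_forcing_number e <= #|Z|.
  move=> Z HZ; rewrite /zero_forcing_number; apply: bigmin_leq => //.
case: n e sym_e irr_e cub con zmin => [|k] e sym_e irr_e cub con zmin.
  have : zero_forcing_number e <= 0.
    rewrite /zero_forcing_number.
    apply: (big_ind (fun x => x <= 0)) => // [x y /= hx _|x _].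
      by rewrite geq_min hx.
    by rewrite (leq_trans (max_card _)) ?card_ord.
  by rewrite leqn0 => /eqP ->.
set v : 'I_k.+1 := ord0.
have : 0 < #|[set w | e v w]| by rewrite cub.
case/card_gt0P => a; rewrite inE => eva.
have [Z [HZ HZc]] : exists Z, zero_forcing_set e Z /\ 2 * #|Z| <= k.+1 + 2.
  apply: (@grow _ e sym_e cub con k.+1 [set v; a] v); first by rewrite !inE eqxx.
  - lia.
  - move=> z; rewrite !inE => /orP[]/eqP->.
      exists a => //; apply: (subsetP (cl_ext e _)).
      by rewrite !inE eqxx orbT.
    exists v; last by rewrite sym_e.
    by apply: (subsetP (cl_ext e _)); rewrite !inE eqxx.
  - have := subset_leq_card (cl_ext e [set v; a]); rewrite cards2.
    case: (v != a); lia.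
by apply: leq_trans HZc; rewrite leq_mul2l zmin ?orbT.
Qed.

Local Open Scope ring_scope.
Lemma nullity_le (R : realType) n (e : rel 'I_n) (A : 'M[R]_n) (Z : {set 'I_n}) :
  symmetric e -> in_SG e A -> zero_forcing_set e Z -> (nullity A <= #|Z|)%N.
Proof.
move=> sym_e [_ HA] /eqP HZ.
have key : forall u : 'rV[R]_n, u *m A = 0 -> (forall j, j \in Z -> u 0 j = 0) -> u = 0.
  move=> u uA uZ.
  pose X := [set j | u 0 j == 0].
  have XE : forall j, (j \in X) = (u 0 j == 0) by move=> j; rewrite inE.
  have : zf_closure e Z \subset X.
    apply: cl_least.
      by apply/subsetP => j jZ; rewrite XE uZ.
    apply/subsetP => w; rewrite in_setU => /orP[//|].
    rewrite inE => /andP[wX /existsP[v /andP[vX /andP[evw /forallP H]]]].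
    have wv : w != v by apply: contraNneq wX => ->.
    have := congr1 (fun M : 'rV[R]_n => M 0 v) uA; rewrite !mxE (bigD1 w) //= big1 ?addr0.
      move/eqP; rewrite mulf_eq0 => /orP[]; first by rewrite XE.
      by move=> h; move: (HA w v wv); rewrite h sym_e evw.
    move=> i iw; have [->|iv] := eqVneq i v; first by move: vX; rewrite XE => /eqP ->; rewrite mul0r.
    case eiv: (e v i).
      have := H i; rewrite eiv /= => /implyP Hi.
      have : i \in X by apply: contraT => iX; move: (Hi iX); rewrite (negbTE iw).
      by rewrite XE => /eqP ->; rewrite mul0r.
    have : A i v == 0 by apply: contraFT eiv; rewrite (HA i v iv) sym_e.
    by move/eqP ->; rewrite mulr0.
  move/subsetP => CX; apply/rowP => j; rewrite mxE.
  by have := CX j; rewrite HZ inE XE => /(_ isT) /eqP.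
pose S : 'M[R]_(n, #|Z|) := \matrix_(i, k) ((i == enum_val k)%:R).
have SZ : forall u : 'rV[R]_n, u *m S = 0 -> forall j, j \in Z -> u 0 j = 0.
  move=> u uS j jZ.
  have := congr1 (fun M : 'rV[R]_#|Z| => M 0 (enum_rank_in jZ j)) uS.
  rewrite !mxE (bigD1 j) //= big1 ?addr0.
    by rewrite !mxE enum_rankK_in // eqxx mulr1.
  by move=> i ij; rewrite !mxE enum_rankK_in // (negbTE ij) mulr0.
set K := kermx A.
have cap0 : \rank (K :&: kermx S)%MS = 0.
  apply/eqP; rewrite mxrank_eq0; apply/eqP/row_matrixP => i; rewrite row0.
  have Hi : (row i (K :&: kermx S) <= K :&: kermx S)%MS := row_sub i _.
  rewrite sub_capmx in Hi; case/andP: Hi => /sub_kermxP h1 /sub_kermxP h2.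
  apply: key => //; exact: SZ.
have := mxrank_sum_cap K (kermx S); rewrite cap0 addn0 !mxrank_ker.
have := rank_leq_col (K + kermx S)%MS.
have := rank_leq_col S; have := rank_leq_row A; have := rank_leq_row S.
rewrite /nullity; lia.
Qed.

Local Close Scope ring_scope.
Theorem mainTheorem6 (R : realType) (n : nat) (e : rel 'I_n) :
  simple_graph e -> cubic e -> connected_graph e ->
  max_nullity R e <= zero_forcing_number e /\
  2 * zero_forcing_number e <= n + 2.
Proof.
move=> Hs cub con; split; last exact: upper.
apply/bigmax_leqP => k /asboolP [A [HA <-]].
rewrite /zero_forcing_number; apply: (big_ind (fun x => nullity A <= x)).
- by rewrite /nullity leq_subr.
- by move=> x y hx hy; rewrite leq_min hx hy.
- by move=> Z HZ; case: Hs => sym_e _; exact: nullity_le sym_e HA HZ.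
Qed.
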